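(* Let $N\ge4$, $M\ge1$, $\mathcal I_N=\{(i,j):i,j\in\{1,\dots,N\},i\ne j\}$, and for each $(i,j)\in\mathcal I_N$ let $Y_{ij}\in\{0,\dots,M\}$ and $X_{ij}\in\mathbb R^k$. Suppose that, conditional on $\mathbf X=(X_{ij})$ and fixed effects $\mathbf F=(F_i)_{i=1}^N$ with $F_i=((\gamma_i,\lambda_{im}):m=1,\dots,M)$, the $Y_{ij}$ are independent across dyads with \[ P(Y_{ij}=m\mid X_{ij},F_i,F_j)=\begin{cases}1-\Lambda(X_{ij}'\beta_0+\gamma_j-\lambda_{i1}), & m=0,\\ \Lambda(X_{ij}'\beta_0+\gamma_j-\lambda_{im})-\Lambda(X_{ij}'\beta_0+\gamma_j-\lambda_{i,m+1}), & 1\le m\le M-1,\\ \Lambda(X_{ij}'\beta_0+\gamma_j-\lambda_{iM}), & m=M,\end{cases} \] where $\Lambda(z)=e^z/(1+e^z)$, $\beta_0\in\mathbb R^k$, and $\lambda_{i1}\le\dots\le\lambda_{iM}$ for each $i$. Let $D_{ij}(m)=\mathbf 1\{Y_{ij}\ge m\}$. For a tetrad $\sigma=(i_1,i_2,j_1,j_2)$ of four distinct nodes and $(m,m')\in\{1,\dots,M\}^2$ define \[ Z_\sigma(m;m')=\tfrac12\Big((D_{i_1j_1}(m)-D_{i_1j_2}(m))-(D_{i_2j_1}(m')-D_{i_2j_2}(m'))\Big), \] $X_\sigma=(X_{i_1j_1},X_{i_1j_2},X_{i_2j_1},X_{i_2j_2})$ and $r_\sigma=(X_{i_1j_1}-X_{i_1j_2})-(X_{i_2j_1}-X_{i_2j_2})$.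 Then for any $(m,m')\in\{1,\dots,M\}^2$, \[ P\big(Z_\sigma(m;m')=1\mid Z_\sigma(m;m')\in\{-1,+1\},X_\sigma\big)=\Lambda(r_\sigma'\beta_0). \]
   Context: $\lambda_{im}$ are category-specific sender threshold effects and $\gamma_j$ is a receiver fixed effect constant across categories. *)

(* Defs.v *)
From HB Require Import structures.
From mathcomp Require Import all_boot all_order all_algebra.
From mathcomp Require Import all_classical all_reals all_analysis.
Set Implicit Arguments. Unset Strict Implicit. Unset Printing Implicit Defensive.
Import Order.TTheory GRing.Theory Num.Theory.
Local Open Scope ring_scope.
Local Open Scope classical_set_scope.

Section Defs.
Variable R : realType.

Definition logistic (z : R) : R := expR z / (1 + expR z).

Definition inner (k : nat) (u v : 'rV[R]_k) : R := \sum_(l < k) u 0 l * v 0 l.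

Definition eta (N k : nat) (X : 'I_N -> 'I_N -> 'rV[R]_k) (beta0 : 'rV[R]_k)
  (gamma : 'I_N -> R) (i j : 'I_N) : R := inner (X i j) beta0 + gamma j.

(* ordered-logit probability P(Y_ij = y | X_ij, F_i, F_j); thresholds
   lambda i m are used for m = 1..M *)
Definition ologit_pmf (N M k : nat) (X : 'I_N -> 'I_N -> 'rV[R]_k)
  (beta0 : 'rV[R]_k) (gamma : 'I_N -> R) (lambda : 'I_N -> nat -> R)
  (i j : 'I_N) (y : 'I_M.+1) : R :=
  let e := eta X beta0 gamma i j in
  if (y == 0 :> nat) then 1 - logistic (e - lambda i 1%N)
  else if (y == M :> nat) then logistic (e - lambda i M)
  else logistic (e - lambda i y) - logistic (e - lambda i y.+1).

Definition Dind (M : nat) (y : 'I_M.+1) (m : nat) : R := ((m <= y)%N)%:R.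

Definition condprob d (T : measurableType d) (P : probability T R)
  (A B : set T) : R := fine (P (A `&` B)) / fine (P B).

End Defs.

(* Main.v *)
Require Import Defs.
From HB Require Import structures.
From mathcomp Require Import all_boot all_order all_algebra.
From mathcomp Require Import all_classical all_reals all_analysis.
From mathcomp Require Import lra zify ring.
From Stdlib Require Import Lia.
Import Order.TTheory GRing.Theory Num.Theory.
Local Open Scope ring_scope.
Local Open Scope classical_set_scope.
Lemma pmf_tail (R : realType) (N M k : nat) (X : 'I_N -> 'I_N -> 'rV[R]_k) (beta0 : 'rV[R]_k)
  (gamma : 'I_N -> R) (lambda : 'I_N -> nat -> R) (i j : 'I_N) (t m : nat) :
  (1 <= m)%N -> (M - m = t)%N -> (m <= M)%N ->
  \sum_(y : 'I_M.+1 | (m <= y)%N) ologit_pmf X beta0 gamma lambda i j y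
  = logistic (Defs.eta X beta0 gamma i j - lambda i m).
Proof.
elim: t m => [|t IH] m h1 ht hmM.
  have mM : m = M by lia.
  subst m.
  rewrite (big_pred1 ord_max); last first.
    move=> y; rewrite /= -(inj_eq val_inj) /=; have := leq_ord y; lia.
  rewrite /ologit_pmf /= eqxx; case: ifP => //= /eqP M0; lia.
have mlt : (m < M)%N by lia.
have mlt' : (m < M.+1)%N by lia.
rewrite (bigD1 (Ordinal mlt')) //=.
rewrite (eq_bigl (fun y : 'I_M.+1 => (m.+1 <= y)%N)); last first.
  move=> y /=; rewrite -(inj_eq val_inj) /=; lia.
rewrite IH //; try lia.
rewrite /ologit_pmf /=.
have -> : (m == 0%N) = false by apply/eqP; lia.
have -> : (m == M) = false by apply/eqP; lia.
by rewrite subrK.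
Qed.
Lemma pmf_sum1 (R : realType) (N M k : nat) (X : 'I_N -> 'I_N -> 'rV[R]_k) (beta0 : 'rV[R]_k)
  (gamma : 'I_N -> R) (lambda : 'I_N -> nat -> R) (i j : 'I_N) :
  (1 <= M)%N ->
  \sum_(y : 'I_M.+1) ologit_pmf X beta0 gamma lambda i j y = 1.
Proof.
move=> hM.
rewrite (bigD1 ord0) //=.
rewrite (eq_bigl (fun y : 'I_M.+1 => (1 <= y)%N)); last first.
  move=> y /=; rewrite -(inj_eq val_inj) /=; lia.
rewrite (@pmf_tail _ _ _ _ _ _ _ _ _ _ (M - 1)) //.
by rewrite /ologit_pmf /= subrK.
Qed.

Lemma pmf_low (R : realType) (N M k : nat) (X : 'I_N -> 'I_N -> 'rV[R]_k) (beta0 : 'rV[R]_k)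
  (gamma : 'I_N -> R) (lambda : 'I_N -> nat -> R) (i j : 'I_N) (m : nat) :
  (1 <= m <= M)%N ->
  \sum_(y : 'I_M.+1 | ~~ (m <= y)%N) ologit_pmf X beta0 gamma lambda i j y
  = 1 - logistic (Defs.eta X beta0 gamma i j - lambda i m).
Proof.
move=> /andP[h1 h2].
rewrite -(@pmf_sum1 R N M k X beta0 gamma lambda i j (leq_trans h1 h2)).
rewrite [in RHS](bigID (fun y : 'I_M.+1 => (m <= y)%N)) /=.
rewrite (@pmf_tail _ _ _ _ _ _ _ _ _ _ (M - m)) //.
by rewrite addrC addrK.
Qed.

Lemma sum_family (R : realType) (I J : finType) (D : pred I) (A : I -> pred J) (j0 : J)
  (f : I -> J -> R) :
  \sum_(c : {ffun I -> J} | [forall p, if D p then A p (c p) else c p == j0])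
     \prod_(p | D p) f p (c p)
  = \prod_(p | D p) \sum_(y | A p y) f p y.
Proof.
symmetry; rewrite big_mkcond /=.
rewrite (eq_bigr (fun p => \sum_(y | if D p then A p y else y == j0)
                   (if D p then f p y else 1))); last first.
  by move=> p _; case: (D p) => //=; rewrite big_pred1_eq.
rewrite bigA_distr_big_dep.
apply: eq_big.
  move=> c; apply/familyP/forallP => H p; exact: H.
move=> c _; rewrite [RHS]big_mkcond /=.
by apply: eq_bigr => p _; case: (D p).
Qed.
Definition canon (T : Type) (N M : nat) (Y : 'I_N -> 'I_N -> T -> 'I_M.+1) (w : T)
  : {ffun 'I_N * 'I_N -> 'I_M.+1} :=
  [ffun p => if p.1 != p.2 then Y p.1 p.2 w else ord0].

Arguments canon {T N M}.

Lemma meas_bool d (T : measurableType d) (b : bool) : measurable [set _ : T | b].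
Proof.
case: b.
  by rewrite (_ : [set _ | true] = setT) //; rewrite predeqE.
by rewrite (_ : [set _ | false] = set0) //; rewrite predeqE.
Qed.

Lemma meas_canon1 d (T : measurableType d) (N M : nat) (Y : 'I_N -> 'I_N -> T -> 'I_M.+1)
  (hYmeas : forall (i j : 'I_N) (y : 'I_M.+1), i != j ->
     measurable [set w | Y i j w = y]) c :
  measurable [set w | canon Y w = c].
Proof.
have H : forall s : seq ('I_N * 'I_N),
    measurable [set w | all (fun p => canon Y w p == c p) s].
  elim=> [|p s IH] /=; first exact: meas_bool.
  rewrite (_ : [set w | _] = [set w | canon Y w p == c p] `&`
             [set w | all (fun p => canon Y w p == c p) s]); last first.
    by rewrite predeqE => w /=; split => [/andP[]|[-> ->]].
  apply: measurableI => //.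
  rewrite /canon; case: (boolP (p.1 != p.2)) => hp.
    rewrite (_ : [set w | _] = [set w | Y p.1 p.2 w = c p]); first exact: hYmeas.
    by rewrite predeqE => w /=; rewrite ffunE hp; split => /eqP.
  rewrite (_ : [set w | _] = [set w | ord0 == c p]); first exact: meas_bool.
  by rewrite predeqE => w /=; rewrite ffunE (negbTE hp).
rewrite (_ : [set w | _] = [set w | all (fun p => canon Y w p == c p) (enum [set: 'I_N * 'I_N])]) //.
rewrite predeqE => w /=; split.
  by move=> ->; apply/allP => p _.
move=> /allP H1; apply/ffunP => p; apply/eqP/H1.
by rewrite mem_enum in_setT.
Qed.

Lemma meas_canon_in d (T : measurableType d) (N M : nat) (Y : 'I_N -> 'I_N -> T -> 'I_M.+1)
  (hYmeas : forall (i j : 'I_N) (y : 'I_M.+1), i != j ->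
     measurable [set w | Y i j w = y]) (s : seq {ffun 'I_N * 'I_N -> 'I_M.+1}) :
  measurable [set w | canon Y w \in s].
Proof.
elim: s => [|c s IH].
  by rewrite (_ : [set w | _] = set0) //; rewrite predeqE => w /=; split.
rewrite (_ : [set w | _] = [set w | canon Y w = c] `|` [set w | canon Y w \in s]).
  by apply: measurableU => //; exact: meas_canon1.
rewrite predeqE => w /=; rewrite in_cons; split.
  by case/orP => [/eqP ->|->]; [left|right].
by case => [->|->]; rewrite ?eqxx ?orbT.
Qed.

Lemma add_canon d (T : measurableType d) (R : realType) (P : probability T R)
  (N M : nat) (Y : 'I_N -> 'I_N -> T -> 'I_M.+1)
  (hYmeas : forall (i j : 'I_N) (y : 'I_M.+1), i != j ->
     measurable [set w | Y i j w = y]) (s : seq {ffun 'I_N * 'I_N -> 'I_M.+1}) :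
  uniq s ->
  P [set w | canon Y w \in s] = (\sum_(c <- s) P [set w | canon Y w = c])%E.
Proof.
elim: s => [|c s IH].
  rewrite big_nil (_ : [set w | _] = set0) ?measure0 //.
  by rewrite predeqE => w /=; split.
move=> /= /andP[cs us].
rewrite (_ : [set w | _] = [set w | canon Y w = c] `|` [set w | canon Y w \in s]).
  rewrite measureU; first by rewrite big_cons -IH.
  - exact: meas_canon1.
  - exact: meas_canon_in.
  rewrite predeqE => w /=; split => // [[e1 e2]].
  by move: cs; rewrite -e1 e2.
rewrite predeqE => w /=; rewrite in_cons; split.
  by case/orP => [/eqP ->|->]; [left|right].
by case => [->|->]; rewrite ?eqxx ?orbT.
Qed.

Lemma prob_Q d (T : measurableType d) (R : realType) (P : probability T R)
  (N M k : nat) (X : 'I_N -> 'I_N -> 'rV[R]_k) (beta0 : 'rV[R]_k)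
  (gamma : 'I_N -> R) (lambda : 'I_N -> nat -> R)
  (Y : 'I_N -> 'I_N -> T -> 'I_M.+1)
  (hYmeas : forall (i j : 'I_N) (y : 'I_M.+1), i != j ->
     measurable [set w | Y i j w = y])
  (hindep : forall y : 'I_N -> 'I_N -> 'I_M.+1,
     P [set w | forall i j : 'I_N, i != j -> Y i j w = y i j] =
     (\prod_(i < N) \prod_(j < N | i != j)
        ologit_pmf X beta0 gamma lambda i j (y i j))%:E)
  (Qp : pred {ffun 'I_N * 'I_N -> 'I_M.+1}) :
  P [set w | Qp (canon Y w)] =
  (\sum_(c | Qp c && [forall p : 'I_N * 'I_N, (p.1 != p.2) || (c p == ord0)])
     \prod_(p | p.1 != p.2) ologit_pmf X beta0 gamma lambda p.1 p.2 (c p))%:E.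
Proof.
set D0 := fun c : {ffun 'I_N * 'I_N -> 'I_M.+1} =>
  [forall p : 'I_N * 'I_N, (p.1 != p.2) || (c p == ord0)].
have canonD w : D0 (canon Y w).
  by apply/forallP => p; rewrite ffunE; case: ifP.
rewrite (_ : [set w | Qp (canon Y w)] =
   [set w | canon Y w \in enum [pred c | Qp c && D0 c]]); last first.
  by rewrite predeqE => w /=; rewrite mem_enum inE canonD andbT.
rewrite add_canon ?enum_uniq // big_enum /= -sumEFin.
apply: eq_big => [c|c /andP[_ hc]]; first by rewrite inE.
rewrite (_ : [set w | canon Y w = c] = [set w | forall i j : 'I_N, i != j ->
     Y i j w = (fun i j => c (i, j)) i j]); last first.
  rewrite predeqE => w /=; split.
    by move=> <- i j h; rewrite ffunE /= h.
  move=> H; apply/ffunP => p; rewrite ffunE; case: ifP => h.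
    by rewrite H //; case: p h.
  by move: (forallP hc p); rewrite h /= => /eqP ->.
rewrite hindep pair_big_dep /=.
by congr (_%:E); apply: eq_bigr => -[a b].
Qed.
Lemma alg (R : realFieldType) (ea eb ec ed : R) :
  0 < ea -> 0 < eb -> 0 < ec -> 0 < ed ->
  (ea / (1 + ea) * ((1 - eb / (1 + eb)) * ((1 - ec / (1 + ec)) * (ed / (1 + ed))))) /
  (ea / (1 + ea) * ((1 - eb / (1 + eb)) * ((1 - ec / (1 + ec)) * (ed / (1 + ed)))) +
   (1 - ea / (1 + ea)) * (eb / (1 + eb) * (ec / (1 + ec) * (1 - ed / (1 + ed)))))
  = (ea / eb / ec * ed) / (1 + ea / eb / ec * ed).
Proof.
move=> ha hb hc hd.
have L (x : R) : 0 < x -> 1 - x / (1 + x) = 1 / (1 + x).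
  move=> hx; field; apply/lt0r_neq0; lra.
rewrite !L //.
have n1 (x : R) : 0 < x -> 1 + x != 0 by move=> hx; apply/lt0r_neq0; lra.
have ne (x : R) : 0 < x -> x != 0 by move=> hx; apply/lt0r_neq0.
field; rewrite !n1 ?ne // ?andbT; by rewrite addr_gt0 ?mulr_gt0.
Qed.


Lemma prod4 (R : comRingType) (I : finType) (D : pred I) (g : I -> R) (a b c e : I) :
  D a -> D b -> D c -> D e ->
  a != b -> a != c -> a != e -> b != c -> b != e -> c != e ->
  (forall p, D p -> p != a -> p != b -> p != c -> p != e -> g p = 1) ->
  \prod_(p | D p) g p = g a * (g b * (g c * g e)).
Proof.
move=> Da Db Dc De ab ac ae bc be ce H.
rewrite (bigD1 a) //= (bigD1 b) /=; last by rewrite Db eq_sym ab.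
rewrite (bigD1 c) /=; last by rewrite Dc eq_sym ac eq_sym bc.
rewrite (bigD1 e) /=; last by rewrite De eq_sym ae eq_sym be eq_sym ce.
rewrite big1 ?mulr1 // => p /andP[/andP[/andP[/andP[Dp pa] pb] pc] pe].
exact: H.
Qed.

Lemma inner_sub (R : realType) (k : nat) (u v b : 'rV[R]_k) :
  inner (u - v) b = inner u b - inner v b.
Proof.
rewrite /inner -sumrB; apply: eq_bigr => l _; by rewrite !mxE mulrBl.
Qed.
Theorem theorem4 (R : realType) (N M k : nat) (hN : (4 <= N)%N) (hM : (1 <= M)%N)
  (X : 'I_N -> 'I_N -> 'rV[R]_k) (beta0 : 'rV[R]_k)
  (gamma : 'I_N -> R) (lambda : 'I_N -> nat -> R)
  (hmono : forall (i : 'I_N) (m : nat), (1 <= m)%N -> (m < M)%N ->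
     lambda i m <= lambda i m.+1)
  (d : measure_display) (Omega : measurableType d) (P : probability Omega R)
  (Y : 'I_N -> 'I_N -> Omega -> 'I_M.+1)
  (hYmeas : forall (i j : 'I_N) (y : 'I_M.+1), i != j ->
     measurable [set w | Y i j w = y])
  (hindep : forall y : 'I_N -> 'I_N -> 'I_M.+1,
     P [set w | forall i j : 'I_N, i != j -> Y i j w = y i j] =
     (\prod_(i < N) \prod_(j < N | i != j)
        ologit_pmf X beta0 gamma lambda i j (y i j))%:E)
  (i1 i2 j1 j2 : 'I_N)
  (hdist : uniq [:: i1; i2; j1; j2])
  (m m' : nat) (hm : (1 <= m <= M)%N) (hm' : (1 <= m' <= M)%N) :
  let Z := fun w : Omega =>
    2^-1 * ((Dind R (Y i1 j1 w) m - Dind R (Y i1 j2 w) m)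
            - (Dind R (Y i2 j1 w) m' - Dind R (Y i2 j2 w) m')) in
  let r := (X i1 j1 - X i1 j2) - (X i2 j1 - X i2 j2) in
  condprob P [set w | Z w = 1] [set w | Z w = 1 \/ Z w = -1]
  = logistic (inner r beta0).
Proof.
move=> Z r.
move: hdist => /=; rewrite !inE !negb_or => /and4P[/and3P[h12 h1a h1b] /andP[h2a h2b] hab _].
have h21 : i2 != i1 by rewrite eq_sym.
have ha1 : j1 != i1 by rewrite eq_sym.
have hb1 : j2 != i1 by rewrite eq_sym.
have ha2 : j1 != i2 by rewrite eq_sym.
have hb2 : j2 != i2 by rewrite eq_sym.
have hba : j2 != j1 by rewrite eq_sym.
have neqs := (negbTE h12, negbTE h1a, negbTE h1b, negbTE h2a, negbTE h2b, negbTE hab,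
              negbTE h21, negbTE ha1, negbTE hb1, negbTE ha2, negbTE hb2, negbTE hba).
pose A1 := fun (p : 'I_N * 'I_N) (y : 'I_M.+1) =>
  if p == (i1, j1) then (m <= y)%N else if p == (i1, j2) then ~~ (m <= y)%N
  else if p == (i2, j1) then ~~ (m' <= y)%N else if p == (i2, j2) then (m' <= y)%N
  else true.
pose Am1 := fun (p : 'I_N * 'I_N) (y : 'I_M.+1) =>
  if p == (i1, j1) then ~~ (m <= y)%N else if p == (i1, j2) then (m <= y)%N
  else if p == (i2, j1) then (m' <= y)%N else if p == (i2, j2) then ~~ (m' <= y)%N
  else true.
pose Q1 := fun c : {ffun 'I_N * 'I_N -> 'I_M.+1} => [forall p, (p.1 != p.2) ==> A1 p (c p)].
pose Qm1 := fun c : {ffun 'I_N * 'I_N -> 'I_M.+1} => [forall p, (p.1 != p.2) ==> Am1 p (c p)].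
have Q1c c : Q1 c = [&& (m <= c (i1, j1))%N, ~~ (m <= c (i1, j2))%N,
                       ~~ (m' <= c (i2, j1))%N & (m' <= c (i2, j2))%N].
  apply/forallP/and4P.
    move=> H; have := H (i1, j1); have := H (i1, j2); have := H (i2, j1); have := H (i2, j2).
    by rewrite /A1 /= !xpair_eqE !eqxx !neqs /= => -> -> -> ->.
  case=> e1 e2 e3 e4 p; apply/implyP => _; rewrite /A1.
  by do 4?[case: ifP => [/eqP -> //|_]].
have Qm1c c : Qm1 c = [&& ~~ (m <= c (i1, j1))%N, (m <= c (i1, j2))%N,
                       (m' <= c (i2, j1))%N & ~~ (m' <= c (i2, j2))%N].
  apply/forallP/and4P.
    move=> H; have := H (i1, j1); have := H (i1, j2); have := H (i2, j1); have := H (i2, j2).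
    by rewrite /Am1 /= !xpair_eqE !eqxx !neqs /= => -> -> -> ->.
  case=> e1 e2 e3 e4 p; apply/implyP => _; rewrite /Am1.
  by do 4?[case: ifP => [/eqP -> //|_]].
have cY w : [/\ canon Y w (i1, j1) = Y i1 j1 w, canon Y w (i1, j2) = Y i1 j2 w,
               canon Y w (i2, j1) = Y i2 j1 w & canon Y w (i2, j2) = Y i2 j2 w].
  by rewrite !ffunE /= h1a h1b h2a h2b.
have Zc1 w : Z w = 1 <-> Q1 (canon Y w).
  rewrite Q1c; have [-> -> -> ->] := cY w; rewrite /Z /Dind.
  case: (m <= Y i1 j1 w)%N; case: (m <= Y i1 j2 w)%N;
  case: (m' <= Y i2 j1 w)%N; case: (m' <= Y i2 j2 w)%N;
  rewrite /= ?mulr1n ?mulr0n; split => H //; try lra; exfalso; lra.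
have Zcm1 w : Z w = -1 <-> Qm1 (canon Y w).
  rewrite Qm1c; have [-> -> -> ->] := cY w; rewrite /Z /Dind.
  case: (m <= Y i1 j1 w)%N; case: (m <= Y i1 j2 w)%N;
  case: (m' <= Y i2 j1 w)%N; case: (m' <= Y i2 j2 w)%N;
  rewrite /= ?mulr1n ?mulr0n; split => H //; try lra; exfalso; lra.
have famE (A : 'I_N * 'I_N -> pred 'I_M.+1) (c : {ffun 'I_N * 'I_N -> 'I_M.+1}) :
  [forall p, (p.1 != p.2) ==> A p (c p)] && [forall p : 'I_N * 'I_N, (p.1 != p.2) || (c p == ord0)]
  = [forall p, if p.1 != p.2 then A p (c p) else c p == ord0].
  apply/andP/forallP.
    by case=> /forallP H1 /forallP H2 p; move: (H1 p) (H2 p); case: ifP.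
  move=> H; split; apply/forallP => p; move: (H p); case: (p.1 != p.2) => /=.
  - by [].
  - by [].
  - by [].
  - by move/eqP ->; rewrite eqxx.
have SA : [set w | Z w = 1] `&` [set w | Z w = 1 \/ Z w = -1] = [set w | Q1 (canon Y w)].
  rewrite predeqE => w /=; split; first by case => /Zc1.
  by move=> /Zc1 h; split => //; left.
have SB : [set w | Z w = 1 \/ Z w = -1] = [set w | (fun c => Q1 c || Qm1 c) (canon Y w)].
  rewrite predeqE => w /=; split.
    by case=> [/Zc1 -> // | /Zcm1 ->]; rewrite orbT.
  by case/orP => [/Zc1 | /Zcm1]; [left|right].
rewrite /condprob SA SB (@prob_Q _ _ _ P _ _ _ X beta0 gamma lambda Y hYmeas hindep Q1).
rewrite (@prob_Q _ _ _ P _ _ _ X beta0 gamma lambda Y hYmeas hindep (fun c => Q1 c || Qm1 c)) /=.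
rewrite [X in _ / X](bigID Q1) /=.
rewrite [X in _ / (X + _)](eq_bigl (fun c => Q1 c && [forall p : 'I_N * 'I_N, (p.1 != p.2) || (c p == ord0)]));
  last by move=> c; case: (Q1 c); rewrite /= ?andbT ?andbF.
rewrite [X in _ / (_ + X)](eq_bigl (fun c => Qm1 c && [forall p : 'I_N * 'I_N, (p.1 != p.2) || (c p == ord0)]));
  last first.
  move=> c; rewrite Q1c Qm1c.
  by case: (m <= c (i1, j1))%N; case: (m <= c (i1, j2))%N;
    case: (m' <= c (i2, j1))%N; case: (m' <= c (i2, j2))%N; rewrite /= ?andbF ?andbT.
rewrite !(eq_bigl _ _ (famE A1)) !(eq_bigl _ _ (famE Am1)).
rewrite !(@sum_family R _ _ (fun p => p.1 != p.2) A1 ord0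
   (fun p y => ologit_pmf X beta0 gamma lambda p.1 p.2 y)).
rewrite (@sum_family R _ _ (fun p => p.1 != p.2) Am1 ord0
   (fun p y => ologit_pmf X beta0 gamma lambda p.1 p.2 y)).
pose g (A : 'I_N * 'I_N -> pred 'I_M.+1) p :=
  \sum_(y | A p y) ologit_pmf X beta0 gamma lambda p.1 p.2 y.
have P4 (A : 'I_N * 'I_N -> pred 'I_M.+1) :
  (forall p, p != (i1, j1) -> p != (i1, j2) -> p != (i2, j1) -> p != (i2, j2) -> A p =1 predT) ->
  \prod_(p | p.1 != p.2) g A p = g A (i1, j1) * (g A (i1, j2) * (g A (i2, j1) * g A (i2, j2))).
  move=> HA; apply: prod4 => //=; rewrite ?xpair_eqE ?eqxx ?neqs ?andbF //.
  move=> p _ pa pb pc pd; rewrite /g (eq_bigl _ _ (HA p pa pb pc pd)).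
  exact: pmf_sum1.
rewrite !(P4 A1) ?(P4 Am1); first last.
- by move=> p pa pb pc pd y; rewrite /A1 (negbTE pa) (negbTE pb) (negbTE pc) (negbTE pd).
- by move=> p pa pb pc pd y; rewrite /Am1 (negbTE pa) (negbTE pb) (negbTE pc) (negbTE pd).
have gt (i j : 'I_N) (mm : nat) : (1 <= mm <= M)%N ->
  \sum_(y : 'I_M.+1 | (mm <= y)%N) ologit_pmf X beta0 gamma lambda i j y
  = logistic (Defs.eta X beta0 gamma i j - lambda i mm).
  by case/andP => ha hb; apply: (@pmf_tail _ _ _ _ _ _ _ _ _ _ (M - mm)).
rewrite /g /A1 /Am1 /= !xpair_eqE !eqxx ?neqs /=.
rewrite !gt // !pmf_low //.
set a := Defs.eta X beta0 gamma i1 j1 - lambda i1 m.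
set b := Defs.eta X beta0 gamma i1 j2 - lambda i1 m.
set c := Defs.eta X beta0 gamma i2 j1 - lambda i2 m'.
set e := Defs.eta X beta0 gamma i2 j2 - lambda i2 m'.
have innerE : inner r beta0 = a - b - c + e.
  by rewrite /r !inner_sub /a /b /c /e /Defs.eta; ring.
rewrite innerE /logistic; clearbody a b c e.
have -> : expR (a - b - c + e) = expR a / expR b / expR c * expR e.
  by rewrite !expRD !expRN.
apply: alg; exact: expR_gt0.
Qed.
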